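(* Consider the projected pseudo-gradient descent algorithm described below, with accuracy parameter $\epsilon \in (0,1)$. In every descent step $t$, the computed pseudo-gradient $\widehat G$ equals the exact gradient (with respect to $\beta$, at $\beta = \beta^{(t)}$) of $F(\beta, X^{(t)})$ for some labeled point set $X^{(t)}$ that is an $\epsilon$-perturbation of $X$ (with the same labels).
   Context: Setting: $X = \{x_1,\dots,x_N\}$ is the set of rows of a design matrix $J = T_1\Join\cdots\Join T_m$, each row a point in $[-1,1]^d$ with label $y_i \in\{-1,1\}$; $\lambda>0$. For a labeled point set $X$, $F(\beta, X) = \frac{1}{N}\sum_i \max(0,1-y_i\beta\cdot x_i) + \lambda\|\beta\|_2^2$, with gradient $\nabla_\beta F(\beta,X) = 2\lambda\beta - \frac{1}{N}\sum_{i:\ 1-y_i\beta\cdot x_i\ge 0} y_i x_i$. For a vector $v$, $|v|$ denotes the vector of entrywise absolute values. A point $p$ is an $\epsilon$-perturbation of $q$ if $p_j = c_j q_j$ with $c_j \in [1-\epsilon,1+\epsilon]$ for every coordinate $j$; a point set $X_a$ is an $\epsilon$-perturbation of $X_b$ if there is a label-preserving bijection mapping each point to an $\epsilon$-perturbation of it. For $j\in[d]$, $D(j)$ is the set of values occurring in column $j$. Pseudo-gradient at $\beta^{(t)}$: (1) For each $j\in[d]$, $v \in D(j)$, compute a $(1+\epsilon)$-approximation $\widehat C^-_{j,v}$ (i.e. $C/(1+\epsilon)\le \widehat C\le(1+\epsilon)C$) of $C^-_{j,v}$, the number of rows $x$ with label $-1$, value $v$ in column $j$, and $1+\beta^{(t)}\cdot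 x \ge \epsilon|\beta^{(t)}|\cdot|x|$. (2) Similarly $\widehat C^+_{j,v}$ approximates $C^+_{j,v}$, the number of rows with label $+1$, value $v$ in column $j$, and $1-\beta^{(t)}\cdot x\ge \epsilon|\beta^{(t)}|\cdot|x|$. (3) $\widehat G^-_k = \sum_{v\in D(k),v<0} v\widehat C^-_{k,v} - \sum_{v\in D(k), v\ge 0} v\widehat C^+_{k,v}$. (4) $\widehat G^+_k = \sum_{v\in D(k),v\ge0} v\widehat C^-_{k,v} - \sum_{v\in D(k),v<0} v\widehat C^+_{k,v}$. (5) $\widehat G = \frac{\widehat G^- + \widehat G^+}{N} + 2\lambda\beta^{(t)}$. Descent: $\beta^{(0)}=0$, $\beta^{(t+1)} = \Pi_{\mathcal K}(\beta^{(t)} - \eta_{t+1}\widehat G)$ with $\eta_t = \frac{1}{\lambda\sqrt{dt}}$ and $\mathcal K$ the ball of radius $\frac{\sqrt d}{2\lambda}$ centered at the origin. *)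

(* Defs.v *)
From HB Require Import structures.
From mathcomp Require Import all_boot all_order all_algebra.
From mathcomp Require Import reals.
Set Implicit Arguments. Unset Strict Implicit. Unset Printing Implicit Defensive.
Import Order.TTheory GRing.Theory Num.Theory.
Local Open Scope ring_scope.

Section Defs.
Variables (R : realType) (N d : nat).

Definition point := 'I_d -> R.

Definition dot (b x : point) : R := \sum_(j < d) b j * x j.
Definition absdot (b x : point) : R := \sum_(j < d) `|b j| * `|x j|.
Definition norm2 (b : point) : R := Num.sqrt (\sum_(j < d) b j ^+ 2).

Definition F (lam : R) (X : 'I_N -> point) (y : 'I_N -> R) (b : point) : R :=
  N%:R^-1 * (\sum_(i < N) Num.max 0 (1 - y i * dot b (X i)))
  + lam * (\sum_(j < d) b j ^+ 2).

Definition gradF (lam : R) (X : 'I_N -> point) (y : 'I_N -> R) (b : point)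
  : point := fun k =>
  2%:R * lam * b k
  - N%:R^-1 * (\sum_(i < N | 0 <= 1 - y i * dot b (X i)) y i * X i k).

Definition D (X : 'I_N -> point) (j : 'I_d) : seq R :=
  undup [seq X i j | i <- enum 'I_N].

Definition Cminus (eps : R) (X : 'I_N -> point) (y : 'I_N -> R) (b : point)
  (j : 'I_d) (v : R) : R :=
  #|[set i : 'I_N | (y i == -1) && (X i j == v)
                    && (eps * absdot b (X i) <= 1 + dot b (X i))]|%:R.
Definition Cplus (eps : R) (X : 'I_N -> point) (y : 'I_N -> R) (b : point)
  (j : 'I_d) (v : R) : R :=
  #|[set i : 'I_N | (y i == 1) && (X i j == v)
                    && (eps * absdot b (X i) <= 1 - dot b (X i))]|%:R.

Definition approx (eps C Chat : R) : Prop :=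
  C / (1 + eps) <= Chat <= (1 + eps) * C.

Definition Gminus (X : 'I_N -> point) (Cm Cp : 'I_d -> R -> R) (k : 'I_d) : R :=
  \sum_(v <- D X k | v < 0) v * Cm k v - \sum_(v <- D X k | 0 <= v) v * Cp k v.
Definition Gplus (X : 'I_N -> point) (Cm Cp : 'I_d -> R -> R) (k : 'I_d) : R :=
  \sum_(v <- D X k | 0 <= v) v * Cm k v - \sum_(v <- D X k | v < 0) v * Cp k v.
Definition Ghat (lam : R) (X : 'I_N -> point) (Cm Cp : 'I_d -> R -> R)
  (b : point) : point := fun k =>
  (Gminus X Cm Cp k + Gplus X Cm Cp k) / N%:R + 2%:R * lam * b k.

Definition proj_ball (r : R) (b : point) : point :=
  if norm2 b <= r then b else fun j => r / norm2 b * b j.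

Definition eta (lam : R) (t : nat) : R := (lam * Num.sqrt (d%:R * t%:R))^-1.

(* descent iterates; Cm t, Cp t are the approximate counts used at step t *)
Fixpoint descent (lam : R) (X : 'I_N -> point)
  (Cm Cp : nat -> 'I_d -> R -> R) (t : nat) : point :=
  match t with
  | 0 => fun _ => 0
  | t'.+1 =>
      let b := descent lam X Cm Cp t' in
      let G := Ghat lam X (Cm t') (Cp t') b in
      proj_ball (Num.sqrt d%:R / (2%:R * lam))
        (fun j => b j - eta lam t'.+1 * G j)
  end.

Definition pt_perturb (eps : R) (p q : point) : Prop :=
  exists c : 'I_d -> R, forall j, 1 - eps <= c j <= 1 + eps /\ p j = c j * q j.

Definition set_perturb (eps : R) (Xa : 'I_N -> point) (ya : 'I_N -> R)
  (Xb : 'I_N -> point) (yb : 'I_N -> R) : Prop :=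
  exists s : 'I_N -> 'I_N, bijective s /\
    forall i, ya (s i) = yb i /\ pt_perturb eps (Xa (s i)) (Xb i).

End Defs.

(* Main.v *)
Require Import Defs.
From HB Require Import structures.
From mathcomp Require Import all_boot all_order all_algebra.
From mathcomp Require Import reals ring lra.
From Stdlib Require Import FunctionalExtensionality.
Import Order.TTheory GRing.Theory Num.Theory.
Local Open Scope ring_scope.

Section Help.
Variables (R : realType) (N d : nat) (X : 'I_N -> point R d) (y : 'I_N -> R)
  (eps : R) (b : point R d) (Cmt Cpt : 'I_d -> R -> R).
Hypothesis Hy : forall i, y i = 1 \/ y i = -1.
Hypothesis Heps : 0 < eps < 1.
Hypothesis Happ : forall j v, v \in D X j ->
     approx eps (Cminus eps X y b j v) (Cmt j v) /\
     approx eps (Cplus eps X y b j v) (Cpt j v).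

Definition cnt i := eps * absdot b (X i) <= 1 - y i * dot b (X i).

Definition cf i j :=
  if cnt i then
    (if y i == 1 then Cpt j (X i j) / Cplus eps X y b j (X i j)
     else Cmt j (X i j) / Cminus eps X y b j (X i j))
  else 1 + eps * (if 0 <= y i * b j * X i j then 1 else -1).

Definition X' i : point R d := fun j => cf i j * X i j.

Lemma normy i : `|y i| = 1.
Proof. by case: (Hy i) => ->; rewrite ?normrN normr1. Qed.

Lemma dot_le (c : 'I_d -> R) (x : point R d) yi :
  (forall j, `|c j - 1| <= eps) -> `|yi| = 1 ->
  yi * dot b (fun j => c j * x j) <= yi * dot b x + eps * absdot b x.
Proof.
move=> hc hy; rewrite /dot /absdot !mulr_sumr -big_split /=; apply: ler_sum => j _.
have -> : yi * (b j * (c j * x j)) = yi * (b j * x j) + (yi * b j * x j) * (c j - 1) by ring.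
rewrite lerD2l; apply: le_trans (ler_norm _) _.
rewrite normrM !normrM hy mul1r [eps * _]mulrC ler_wpM2l //.
by rewrite mulr_ge0.
Qed.

Lemma inD i j : X i j \in D X j.
Proof. by rewrite /D mem_undup; apply/mapP; exists i; rewrite ?mem_enum. Qed.

Lemma ratio_bd (C Ch : R) : 0 < C -> approx eps C Ch ->
  1 - eps <= Ch / C <= 1 + eps.
Proof.
move=> hC /andP [h1 h2]; case/andP: Heps => e0 e1.
have he : 0 < 1 + eps by lra.
apply/andP; split.
  rewrite ler_pdivlMr //; apply: le_trans h1.
  rewrite ler_pdivlMr //; nra.
by rewrite ler_pdivrMr // mulrC.
Qed.

Lemma cf_bd i j : 1 - eps <= cf i j <= 1 + eps.
Proof.
case/andP: Heps => e0 e1.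
rewrite /cf; case: ifP => hc.
  case: ifP => /eqP hy.
    apply: ratio_bd; last by case: (Happ _ _ (inD i j)).
    rewrite ltr0n; apply/card_gt0P; exists i.
    by rewrite inE hy !eqxx /=; move: hc; rewrite /cnt hy mul1r.
  have hy' : y i = -1 by case: (Hy i).
  apply: ratio_bd; last by case: (Happ _ _ (inD i j)).
  rewrite ltr0n; apply/card_gt0P; exists i.
  by rewrite inE hy' !eqxx /=; move: hc; rewrite /cnt hy' mulN1r opprK.
by case: ifP => _; lra.
Qed.

Lemma active i : (0 <= 1 - y i * dot b (X' i)) = cnt i.
Proof.
case/andP: Heps => e0 e1.
case: (boolP (cnt i)) => hc.
  have := @dot_le (cf i) (X i) (y i).
  have hb : forall j, `|cf i j - 1| <= eps.
    by move=> j; have := cf_bd i j; rewrite ler_norml => /andP [? ?]; apply/andP; split; lra.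
  move=> /(_ hb (normy i)) h; rewrite /X'; move: hc; rewrite /cnt; lra.
have -> : y i * dot b (X' i) = y i * dot b (X i) + eps * absdot b (X i).
  rewrite /dot /absdot !mulr_sumr -big_split /=; apply: eq_bigr => j _.
  rewrite /X' /cf (negbTE hc).
  have hn : `|b j| * `|X i j| = `|y i * b j * X i j| by rewrite !normrM normy mul1r.
  rewrite hn; case: ifP => h.
    rewrite (ger0_norm h); ring.
  rewrite (ltr0_norm); last by rewrite ltNge h.
  ring.
apply/negbTE; move: hc; rewrite /cnt -!ltNge; lra.
Qed.


Lemma fix_c (C Ch v : R) : approx eps C Ch -> Ch / C * v * C = v * Ch.
Proof.
case/andP: Heps => e0 e1.
move=> /andP [h1 h2]; case: (eqVneq C 0) => [h0|h].
  rewrite h0 mulr0 in h2; rewrite h0 mul0r in h1.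
  have -> : Ch = 0 by apply/le_anti; rewrite h1 h2.
  by rewrite !(mul0r, mulr0).
by field.
Qed.

Lemma per_v k v : v \in D X k ->
  \sum_(i | cnt i && (X i k == v)) y i * X' i k = v * Cpt k v - v * Cmt k v.
Proof.
move=> hv.
have n1 : ((1:R) == -1) = false by apply/negbTE/negP => /eqP h; lra.
have n2 : ((-1:R) == 1) = false by rewrite eq_sym n1.
rewrite (bigID (fun i => y i == 1)) /=.
have -> : \sum_(i | (cnt i && (X i k == v)) && (y i == 1)) y i * X' i k =
   \sum_(i in [set i : 'I_N | (y i == 1) && (X i k == v)
                    && (eps * absdot b (X i) <= 1 - dot b (X i))])
     (Cpt k v / Cplus eps X y b k v * v).
  apply: eq_big => i.
    rewrite inE andbC; case: eqP => // hy; rewrite /cnt hy mul1r /=; exact: andbC.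
  move=> /andP [/andP [hc /eqP hx] /eqP hy].
  by rewrite /X' /cf hc hy eqxx hx mul1r.
have -> : \sum_(i | (cnt i && (X i k == v)) && ~~ (y i == 1)) y i * X' i k =
   \sum_(i in [set i : 'I_N | (y i == -1) && (X i k == v)
                    && (eps * absdot b (X i) <= 1 + dot b (X i))])
     (- (Cmt k v / Cminus eps X y b k v * v)).
  apply: eq_big => i.
    rewrite inE; case: (Hy i) => hy; rewrite hy.
      by rewrite eqxx n1 /= andbF.
    rewrite n2 eqxx /= andbT /cnt hy mulN1r opprK; exact: andbC.
  move=> /andP [/andP [hc /eqP hx] hy].
  have hy' : y i = -1 by case: (Hy i) => // h; rewrite h eqxx in hy.
  by rewrite /X' /cf hc (negbTE hy) hy' hx mulN1r.
rewrite !sumr_const.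
have E : forall (x : R) n, x *+ n = x * n%:R by move=> x n; rewrite mulr_natr.
rewrite (E (Cpt k v / _ * v)) (E (- _)).
case: (Happ _ _ hv) => hm hp.
by rewrite (fix_c _ _ v hp) mulNr (fix_c _ _ v hm).
Qed.

Lemma grad_sum k :
  \sum_(i < N | 0 <= 1 - y i * dot b (X' i)) y i * X' i k =
  \sum_(v <- D X k) v * Cpt k v - \sum_(v <- D X k) v * Cmt k v.
Proof.
have -> : \sum_(i < N | 0 <= 1 - y i * dot b (X' i)) y i * X' i k =
          \sum_(i < N | cnt i) y i * X' i k by apply: eq_bigl => i; exact: active.
rewrite -sumrB.
have -> : \sum_(v <- D X k) (v * Cpt k v - v * Cmt k v) =
          \sum_(v <- D X k) \sum_(i | cnt i && (X i k == v)) y i * X' i k.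
  rewrite big_seq_cond [RHS]big_seq_cond; apply: eq_bigr => v /andP [hv _].
  by rewrite per_v.
rewrite [RHS](eq_bigr (fun v => \sum_(i | cnt i) (if X i k == v then y i * X' i k else 0))); last by move=> v _; rewrite big_mkcondr.
rewrite exchange_big /=; apply: eq_bigr => i _.
rewrite -big_mkcond big_const_seq.
have -> : count (fun v => X i k == v) (D X k) = 1%N.
  rewrite (eq_count (a2 := pred1 (X i k))); last by move=> v; rewrite /= eq_sym.
  by rewrite count_uniq_mem ?undup_uniq // inD.
by rewrite /= addr0.
Qed.

End Help.

Lemma Gsum (R : realType) (N d : nat) (X : 'I_N -> point R d)
  (Cm Cp : 'I_d -> R -> R) k :
  Gminus X Cm Cp k + Gplus X Cm Cp k =
  \sum_(v <- D X k) v * Cm k v - \sum_(v <- D X k) v * Cp k v.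
Proof.
rewrite /Gminus /Gplus (bigID (fun v => v < 0) xpredT (fun v => v * Cm k v))
  (bigID (fun v => v < 0) xpredT (fun v => v * Cp k v)) /=.
have E : forall F : R -> R, \sum_(v <- D X k | ~~ (v < 0)) F v = \sum_(v <- D X k | 0 <= v) F v.
  by move=> F; apply: eq_bigl => v; rewrite leNgt.
rewrite !E; lra.
Qed.

Theorem lemma2 (R : realType) (N d : nat) (X : 'I_N -> point R d)
  (y : 'I_N -> R) (lam eps : R)
  (Cm Cp : nat -> 'I_d -> R -> R) :
  (forall i j, -1 <= X i j <= 1) ->
  (forall i, y i = 1 \/ y i = -1) ->
  0 < lam -> 0 < eps < 1 ->
  (forall t j v, v \in D X j ->
     approx eps (Cminus eps X y (descent lam X Cm Cp t) j v) (Cm t j v) /\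
     approx eps (Cplus eps X y (descent lam X Cm Cp t) j v) (Cp t j v)) ->
  forall t, exists (X' : 'I_N -> point R d) (y' : 'I_N -> R),
    set_perturb eps X' y' X y /\
    Ghat lam X (Cm t) (Cp t) (descent lam X Cm Cp t)
      = gradF lam X' y' (descent lam X Cm Cp t).
Proof.
move=> _ Hy _ Heps Happ t.
set b := descent lam X Cm Cp t.
have Ha := Happ t.
exists (@X' R N d X y eps b (Cm t) (Cp t)), y; split.
  exists id; split; first by exists id.
  move=> i; split => //; exists (@cf R N d X y eps b (Cm t) (Cp t) i) => j; split => //.
  exact: (@cf_bd R N d X y eps b (Cm t) (Cp t) Hy Heps Ha).
apply: (@functional_extensionality 'I_d R) => k.
rewrite /Ghat /gradF Gsum (@grad_sum R N d X y eps b (Cm t) (Cp t) Hy Heps Ha).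
rewrite /b; ring.
Qed.
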